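(* Let $R$ be a finite group which is neither an abelian group of exponent greater than $2$ nor a generalized dicyclic group. Then the set $$\{S\subseteq R\mid S=S^{-1},\ R<N_{\mathrm{Aut}(\Gamma(R,S))}(R)\}$$ has cardinality at most $2^{\mathbf{c}(R)-|R|/96+(\log_2|R|)^2}$.
   Context: $\mathbf{I}(R)=\{x\in R\mid x^2=1\}$, $\mathbf{c}(R)=(|R|+|\mathbf{I}(R)|)/2$. The Cayley digraph $\Gamma(R,S)$ has vertex set $R$ and an arc $(g,h)$ iff $hg^{-1}\in S$; $R$ is identified with its right regular representation inside $\mathrm{Aut}(\Gamma(R,S))$, and $N_{\mathrm{Aut}(\Gamma(R,S))}(R)$ is its normalizer. Generalized dicyclic group: for $A$ abelian of even order and exponent $>2$ and $y$ an involution of $A$, $\mathrm{Dic}(A,y,x)=\langle A,x\mid x^2=y,\ x^{-1}ax=a^{-1}\ \forall a\in A\rangle$; a group is generalized dicyclic if isomorphic to some such group. *)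

(* Defs.v *)
From HB Require Import structures.
From Stdlib Require Import Reals.
From mathcomp Require Import all_boot all_order all_fingroup all_solvable.
Set Implicit Arguments. Unset Strict Implicit. Unset Printing Implicit Defensive.
Import GroupScope.

Definition rreg (gT : finGroupType) (x : gT) : {perm gT} := perm (mulIg x).

(* The image of R (= the whole group gT) under the right regular representation. *)
Definition rregR (gT : finGroupType) : {set {perm gT}} := [set rreg x | x : gT].

(* Aut(Gamma(R,S)): permutations of the vertex set R preserving arcs and
   non-arcs, where (g,h) is an arc iff h g^-1 \in S. *)
Definition CayAut (gT : finGroupType) (S : {set gT}) : {set {perm gT}} :=
  [set s : {perm gT} | [forall g : gT, forall h : gT,
      (h * g^-1 \in S) == (s h * (s g)^-1 \in S)]].

Definition invol_set (gT : finGroupType) : {set gT} := [set x : gT | x ^+ 2 == 1].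
Definition cR (gT : finGroupType) : R :=
  Rdiv (INR (#|[set: gT]| + #|invol_set gT|)%N) 2.

Definition abelian_exp_gt2 (gT : finGroupType) : bool :=
  abelian [set: gT] && (2 < exponent [set: gT])%N.

(* Generalized dicyclic: R has an abelian subgroup A of index 2 and exponent > 2,
   and an element x outside A with x^2 an involution of A and x^-1 a x = a^-1
   for all a in A.  (Intrinsic form of R ~= Dic(A, y, x), y = x^2.) *)
Definition gen_dicyclic (gT : finGroupType) : Prop :=
  exists (A : {group gT}) (x : gT),
    [/\ abelian A, #|[set: gT] : A| = 2%N, (2 < exponent A)%N, x \notin A
        & [/\ x ^+ 2 \in A, #[x ^+ 2] = 2%N &
             forall a, a \in A -> a ^ x = a^-1]].

Definition bad_sets (gT : finGroupType) : {set {set gT}} :=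
  [set S : {set gT} | (S^-1 == S) && (rregR gT \proper 'N_(CayAut S)(rregR gT))].

(* Main.v *)
Require Import Defs.
From HB Require Import structures.
From Stdlib Require Import Reals Lra.
From mathcomp Require Import all_boot all_order all_fingroup all_solvable.
From mathcomp Require Import zify.
Set Implicit Arguments. Unset Strict Implicit. Unset Printing Implicit Defensive.
Open Scope group_scope.

Definition homp (gT : finGroupType) (a : {perm gT}) := forall x y, a (x * y) = a x * a y.

Lemma bad_aut (gT : finGroupType) (S : {set gT}) : S \in bad_sets gT ->
  S^-1 = S /\ exists a : {perm gT}, [/\ homp a, a != 1 & forall x, (a x \in S) = (x \in S)].
Proof.
rewrite inE => /andP[/eqP SV /properP[_ [s sN sR]]].
move: sN; rewrite inE => /andP[sC sNr].
have key : forall v y, s (v * y) = s v * (s 1)^-1 * s y.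
  move=> v y.
  have : rreg y ^ s \in rregR gT by rewrite memJ_norm // imset_f.
  case/imsetP => z _ Ez.
  have Hz : forall u, s ((s^-1 u) * y) = u * z.
    move=> u; have := congr1 (fun p : {perm gT} => p u) Ez.
    by rewrite /conjg !permM /rreg !permE.
  have := Hz (s 1); rewrite permK mul1g => ->.
  have := Hz (s v); rewrite permK => ->.
  by rewrite mulgA mulgKV.
split=> //.
exists (s * rreg (s 1)^-1); split.
- move=> x y; rewrite !permM /rreg !permE key.
  by rewrite -!mulgA.
- apply/eqP => E; move/negP: sR; apply; apply/imsetP; exists (s 1) => //.
  apply/permP => x; have := congr1 (fun p : {perm gT} => p x) E.
  rewrite permM /rreg !permE => Ex.
  by rewrite -{2}Ex mulgKV.
- move=> x; rewrite permM /rreg permE.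
  move: sC; rewrite inE => /forallP /(_ 1) /forallP /(_ x) /eqP.
  by rewrite invg1 mulg1 => ->.
Qed.

Ltac cardlia :=
 repeat (match goal with
 | |- context[#|?A|] => let x := fresh "k" in progress (set x := #|A|); clearbody x; revert x end);
 match goal with |- ?G => let H := fresh "H" in assert (H : G) by (clear; intros; first [lia | nia]); exact H end.

Lemma big_subg0 (gT : finGroupType) (G H : {group gT}) :
  H \subset G -> #|G| < 2 * #|H| -> H :=: G.
Proof.
move=> sHG lt; have L := Lagrange sHG.
have k1 : #|G : H| = 1%N.
  have := indexg_gt0 G H; move: L lt; case: #|G : H| => [|[|k]] //; nia.
apply/eqP; rewrite eqEcard sHG /=; move: L; rewrite k1 muln1 => ->; done.
Qed.

Lemma big_subg (gT : finGroupType) (G : {group gT}) (H : {set gT}) :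
  group_set H -> H \subset G -> #|G| < 2 * #|H| -> H = G.
Proof. by move=> gH; apply: (@big_subg0 _ G (Group gH)). Qed.

Lemma cardI_ge (T : finType) (X Y Z : {set T}) :
  X \subset Z -> Y \subset Z -> #|X| + #|Y| <= #|X :&: Y| + #|Z|.
Proof.
move=> sX sY; rewrite -cardsUI addnC leq_add2l.
by apply: subset_leq_card; rewrite subUset sX sY.
Qed.

Lemma inv34 (gT : finGroupType) (H : {group gT}) (f : gT -> gT) :
  (forall u v, f (u * v) = f u * f v) ->
  3 * #|H| < 4 * #|[set c in H | f c == c^-1]| ->
  abelian H /\ forall c, c \in H -> f c = c^-1.
Proof.
move=> fM.
set V := [set c in H | f c == c^-1] => lt.
have sVH : V \subset H by apply/subsetP => c; rewrite inE => /andP[].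
have f1 : f 1 = 1.
  by apply: (mulgI (f 1)); rewrite -fM !mulg1.
have VC : V \subset 'C(H).
  apply/subsetP => u uV; have Hu := subsetP sVH u uV.
  rewrite -sub_cent1.
  have sCH : 'C_H[u] \subset H by apply: subsetIl.
  suff : 'C_H[u] = H by move=> E; rewrite -E subsetIr.
  apply: big_subg => //; first exact: groupP.
  set Vu := V :&: (u^-1 *: V).
  have sVu : Vu \subset 'C_H[u].
    apply/subsetP => v /setIP[Vv]; rewrite mem_lcoset invgK => uvV.
    apply/setIP; split; first exact: (subsetP sVH v Vv).
    apply/cent1P.
    move: (Vv) (uvV) (uV); rewrite !inE => /andP[Hv /eqP fv] /andP[_ /eqP fuv] /andP[_ /eqP fu].
    move: fuv; rewrite fM fu fv invMg => E.
    by rewrite /commute -[v * u]invgK invMg E invMg !invgK.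
  have sU : u^-1 *: V \subset H.
    apply/subsetP => w; rewrite mem_lcoset invgK => Vw.
    by rewrite -(mulKg u w) groupM ?groupV // (subsetP sVH).
  have := cardI_ge sVH sU; rewrite card_lcoset -/Vu.
  move=> h2; apply: (@leq_trans (2 * #|Vu|)); first by clear -lt h2; clearbody V Vu; move: lt h2; set a := #|H|; set b := #|V|; set c := #|Vu|; cardlia.
  by rewrite leq_mul2l (subset_leq_card sVu) orbT.
have ab : abelian H.
  have sZ : 'C_H(H) \subset H by apply: subsetIl.
  have E : 'C_H(H) = H.
    apply: big_subg => //; first exact: groupP.
    have : V \subset 'C_H(H) by rewrite subsetI sVH VC.
    move/subset_leq_card; move: lt; cardlia.
  by rewrite /abelian -{1}E subsetIr.
split=> //.
have gV : group_set V.
  apply/group_setP; split; first by rewrite inE group1 f1 invg1 eqxx.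
  move=> u v; rewrite !inE => /andP[Hu /eqP fu] /andP[Hv /eqP fv].
  rewrite groupM //= fM fu fv invMg.
  have cuv : commute u v by move/centsP: ab => /(_ u Hu v Hv).
  by rewrite -!invMg cuv.
have E : V = H.
  apply: big_subg => //; move: lt; cardlia.
move=> c Hc; have : c \in V by rewrite E.
by rewrite inE => /andP[_ /eqP].
Qed.

Definition Dset (gT : finGroupType) (a : {perm gT}) : {set gT} :=
  [set x | (a x != x) && (a x != x^-1)].

Lemma conj_comm (gT : finGroupType) (x y : gT) : commute x y -> x ^ y = x.
Proof. by move=> c; rewrite conjgE c mulKg. Qed.

Lemma comm_conj (gT : finGroupType) (x y : gT) : x ^ y = x -> commute x y.
Proof. by move=> E; rewrite /commute -{2}E conjgE mulKVg. Qed.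

Lemma sum_mem (T : finType) (B : {set T}) : \sum_(z : T) (z \in B : nat) = #|B|.
Proof.
rewrite -sum1_card [RHS]big_mkcond /=; apply: eq_bigr => z _.
by case: (z \in B).
Qed.

Lemma exp_le2 (gT : finGroupType) (G : {group gT}) :
  exponent G <= 2 -> forall c, c \in G -> c ^+ 2 = 1.
Proof.
move=> le c Gc; suff : exponent G %| 2 by move/exponentP => /(_ c Gc).
have := exponent_gt0 G; move: le; case: (exponent G) => [|[|[|]]] //.
Qed.

Lemma le2_exp (gT : finGroupType) (G : {group gT}) :
  (forall c, c \in G -> c ^+ 2 = 1) -> exponent G <= 2.
Proof. by move/exponentP => d; apply: dvdn_leq. Qed.

Lemma hom1 (gT : finGroupType) (a : {perm gT}) : homp a -> a 1 = 1.
Proof. by move=> aM; apply: (mulgI (a 1)); rewrite -aM !mulg1. Qed.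

Lemma homV (gT : finGroupType) (a : {perm gT}) : homp a -> forall x, a x^-1 = (a x)^-1.
Proof.
move=> aM x; apply: (mulgI (a x)); by rewrite -aM !mulgV hom1.
Qed.

Lemma card_sum (T : finType) (B : {set T}) (P : pred T) :
  #|[set c in B | P c]| = \sum_(c in B) (P c : nat).
Proof.
rewrite -sum1_card big_mkcond [RHS]big_mkcond /=; apply: eq_bigr => c _.
by rewrite inE; case: (c \in B); case: (P c).
Qed.

Lemma inv_case (gT : finGroupType) (a : {perm gT}) :
  homp a -> (forall x, a (a x) = x) -> a != 1 ->
  ~ abelian_exp_gt2 gT -> ~ gen_dicyclic gT -> #|[set: gT]| <= 24 * #|Dset a|.
Proof.
move=> aM aa a1 nab ndic.
have a1' := hom1 aM; have aV := homV aM.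
pose A := [set x | a x == x].
have gA : group_set A.
  apply/group_setP; split; first by rewrite inE a1'.
  by move=> x y; rewrite !inE aM => /eqP-> /eqP->.
pose AG := Group gA.
have AGE : (AG : {set gT}) = A by [].
pose I := [set x | a x == x^-1].
have inD : forall x, (x \in Dset a) = (x \notin A) && (x \notin I) by move=> x; rewrite !inE.
have AT : A != [set: gT].
  apply: contra a1 => /eqP AT; apply/eqP/permP => x.
  have : x \in A by rewrite AT inE.
  by rewrite inE perm1 => /eqP.
have sAT : AG \subset [set: gT] by apply: subsetT.
have Lk := Lagrange sAT.
have k2 : 2 <= #|[set: gT] : AG|.
  move: Lk; have := indexg_gt0 [set: gT] AG; case: #|_ : _| => [|[|k]] // _.
  rewrite muln1 => E; case/negP: AT; rewrite eqEcard subsetT /=.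
  by move: E; rewrite /= => ->.
rewrite leqNgt; apply/negP => Dlt.
have c1 : forall x y, x \in I -> y \in I -> x * y \in I -> commute x y.
  move=> x y; rewrite !inE aM => /eqP-> /eqP-> /eqP; rewrite invMg => E.
  by rewrite /commute -[x * y]invgK invMg -E invMg !invgK.
have c2 : forall x c, x \in I -> c \in A -> (x * c \in I) = (c ^ x == c^-1).
  move=> x c; rewrite !inE aM => /eqP-> /eqP->; rewrite invMg conjgE mulgA.
  by rewrite -(inj_eq (mulIg x)) mulgKV.
pose W := A :|: [set x in I | [forall c in A, c ^ x == c^-1]].
have inW : forall x, x \in W -> x \notin A -> x \in I /\ forall c, c \in A -> c ^ x = c^-1.
  move=> x; rewrite !inE => /orP[-> //|/andP[xI /forallP fa]] _.
  by split=> // c cA; have /implyP/(_ cA)/eqP := fa c.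
have c4 : forall z, z \notin W -> #|A| <= 4 * #|[set c in A | z * c \in Dset a]|.
  move=> z zW; rewrite leqNgt; apply/negP => lt; move/negP: zW; apply.
  case: (boolP (z \in A)) => [zA'|zA]; first by rewrite inE zA'.
  have zcA : forall c, c \in A -> z * c \notin A.
    move=> c cA; apply: contra zA => zcA.
    by rewrite -(mulgK c z) -AGE groupM ?groupV.
  pose P := [set c in A | z * c \in I].
  have cov : #|A| <= #|P| + #|[set c in A | z * c \in Dset a]|.
    apply: (leq_trans _ (leq_card_setU _ _)).
    apply: subset_leq_card; apply/subsetP => c cA; rewrite in_setU [c \in P]inE [c \in [set c in A | _]]inE cA inD (zcA c cA) /=.
    by case: (z * c \in I).
  have P0 : 0 < #|P| by move: cov lt; cardlia.
  case/card_gt0P: P0 => c0; rewrite inE => /andP[c0A zc0I].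
  pose x := z * c0.
  pose V := [set c in AG | c ^ x == c^-1].
  have PV : [set c0^-1 * c | c in P] \subset V.
    apply/subsetP => y /imsetP[c]; rewrite inE => /andP[cA zcI] ->.
    have cA' : c0^-1 * c \in A by rewrite -AGE groupM ?groupV.
    rewrite inE; apply/andP; split; first exact: cA'.
    by rewrite -c2 // /x mulgA mulgK.
  have := subset_leq_card PV; rewrite card_imset; last exact: mulgI.
  move=> PVle.
  have [abA invA] : abelian AG /\ forall c, c \in AG -> c ^ x = c^-1.
    apply: inv34; first by move=> u v; rewrite conjMg.
    rewrite -/V; move: cov lt PVle; cardlia.
  have zE : z = x * c0^-1 by rewrite /x mulgK.
  have c0A' : c0^-1 \in A by rewrite -AGE groupV.
  apply/setUP; right; apply/setIdP; split.
    by rewrite zE c2 // invA ?invgK //.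
  apply/forallP => c; apply/implyP => cA.
  rewrite zE conjgM invA // conj_comm //.
  have cc : commute c c0^-1 by move/centsP: abA => /(_ c cA _ c0A').
  by apply: commute_sym; apply: commuteV; apply: commute_sym.
have c5 : #|~: W| <= 4 * #|Dset a|.
  have S1 : \sum_(z : gT) #|[set c in A | (z * c)%g \in Dset a]| = (#|A| * #|Dset a|)%N.
    under eq_bigr => z _ do rewrite card_sum.
    rewrite exchange_big /=.
    have E2 : forall c, \sum_(z : gT) ((z * c)%g \in Dset a : nat) = #|Dset a|.
      by move=> c; rewrite -sum_mem [RHS](reindex_inj (mulIg c)).
    by rewrite (eq_bigr _ (fun c _ => E2 c)) sum_nat_const.
  have S2 : \sum_(z in ~: W) #|A| <= \sum_(z : gT) 4 * #|[set c in A | (z * c)%g \in Dset a]|.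
    rewrite big_mkcond; apply: leq_sum => z _; case: ifP => // zW; apply: c4.
    by rewrite in_setC in zW.
  move: S2; rewrite sum_nat_const -big_distrr S1 /= mulnCA mulnC.
  have A0 : 0 < #|A| by apply/card_gt0P; exists 1; rewrite -AGE group1.
  by rewrite leq_pmul2l.
have LkN : (#|A| * #|[set: gT] : AG|)%N = #|gT| by rewrite -cardsT -Lk.
have W56 : 5 * #|gT| < 6 * #|W|.
  have := cardsC W; move: c5 Dlt; rewrite cardsT; cardlia.
have A2 : 2 * #|A| <= #|gT|.
  rewrite -LkN mulnC leq_mul2l; apply/orP; right; exact: k2.
have WA : ~~ (W \subset A).
  apply/negP => /subset_leq_card; move: W56 A2; cardlia.
case/subsetPn: WA => x0 x0W x0A.
have [x0I x0inv] := inW x0 x0W x0A.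
have [abA _] : abelian AG /\ forall c, c \in AG -> c ^ x0 = c^-1.
  apply: inv34; first by move=> u v; rewrite conjMg.
  have -> : [set c in AG | c ^ x0 == c^-1] = A.
    apply/setP => c; rewrite [LHS]inE; case: (boolP (c \in AG)) => cA /=.
      by rewrite x0inv ?eqxx.
    by apply/esym/negbTE.
  have A0 : 0 < #|A| by apply/card_gt0P; exists 1; rewrite -AGE group1.
  move: A0; rewrite AGE; cardlia.
have x0sq : x0 ^+ 2 != 1.
  apply: contra x0A => sq; rewrite inE.
  move: x0I; rewrite inE => /eqP->; rewrite eq_invg_mul.
  by rewrite expgS expg1 in sq.
have x0sqT : ~~ (exponent [set: gT] <= 2).
  apply/negP => le; case/negP: x0sq; apply/eqP.
  by apply: (@exp_le2 _ [set: gT]%G) => //; rewrite inE.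
case: (eqVneq #|[set: gT] : AG| 2) => [k2e|k3].
  have cover : forall y, y \in A \/ x0^-1 * y \in A.
    have disj : A :&: x0 *: A = set0.
      apply/setP => y; rewrite in_setI mem_lcoset in_set0.
      apply/negP => /andP[yA x0yA]; case/negP: x0A.
      by rewrite -(invgK x0) -AGE groupV -(mulgK y x0^-1) groupM ?groupV.
    have E : A :|: x0 *: A = [set: gT].
      apply/eqP; rewrite eqEcard subsetT /= cardsU disj cards0 subn0 card_lcoset cardsT.
      by rewrite -LkN k2e muln2 addnn.
    move=> y; have : y \in A :|: x0 *: A by rewrite E inE.
    by rewrite in_setU mem_lcoset => /orP[]; [left|right].
  have gcover : forall K : {group gT}, A \subset K -> x0 \in K -> forall y, y \in K.
    move=> K sAK x0K y; case: (cover y) => [yA|yA]; first exact: (subsetP sAK).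
    by rewrite -(mulKVg x0 y) groupM // (subsetP sAK).
  have x0sqA : x0 ^+ 2 \in A.
    case: (cover (x0 ^+ 2)) => // h; case/negP: x0A.
    by rewrite expgS expg1 mulKg in h.
  have ysq : (x0 ^+ 2) ^+ 2 = 1.
    have e1 : a (x0 ^+ 2) = x0 ^+ 2 by move: x0sqA; rewrite inE => /eqP.
    have e2 : a (x0 ^+ 2) = (x0 ^+ 2)^-1.
      move: x0I; rewrite inE => /eqP e.
      by rewrite expgS expg1 aM e -invMg.
    apply/eqP; rewrite expgS expg1 -eq_invg_mul; apply/eqP.
    by rewrite -e2 e1.
  have ord2 : #[x0 ^+ 2] = 2%N.
    have d : #[x0 ^+ 2] %| 2 by rewrite order_dvdn ysq.
    have n1 : #[x0 ^+ 2] != 1%N by rewrite order_eq1.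
    have := dvdn_leq (isT : 0 < 2) d; have := order_gt0 (x0 ^+ 2).
    by move: n1; case: #[_] => [|[|[|]]].
  case: (leqP (exponent AG) 2) => [le|gt].
    have cinv : forall c, c \in A -> c^-1 = c.
      move=> c cA; apply/eqP; rewrite eq_invg_mul.
      by have := exp_le2 le cA; rewrite expgS expg1 => ->.
    have cx0 : forall c, c \in A -> commute c x0.
      by move=> c cA; apply: comm_conj; rewrite x0inv // cinv.
    have x0Z : x0 \in 'C([set: gT]).
      rewrite -sub_cent1; apply/subsetP => y _; apply: gcover; last exact: cent1id.
      by apply/subsetP => c cA; apply/cent1P; apply: cx0.
    have AZ : A \subset 'C([set: gT]).
      apply/subsetP => c cA; rewrite -sub_cent1; apply/subsetP => y _; apply: gcover.
        apply/subsetP => d dA; apply/cent1P.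
        by move/centsP: abA => /(_ d dA c cA).
      by apply/cent1P; apply: commute_sym; apply: cx0.
    apply: nab; apply/andP; split; last by rewrite ltnNge.
    rewrite /abelian; apply/subsetP => y _.
    by apply: (gcover ('C([set: gT]))%G).
  apply: ndic; exists AG, x0; split => //.
have A3 : 3 * #|A| <= #|gT|.
  rewrite -LkN mulnC leq_mul2l; apply/orP; right.
  by move: k2 k3; case: #|_ : _| => [|[|[|]]].
have Yb : forall x, #|W| + #|W| <= #|W :&: x^-1 *: W| + #|gT|.
  move=> x; have := @cardI_ge _ W (x^-1 *: W) [set: gT] (subsetT _) (subsetT _).
  by rewrite card_lcoset cardsT.
case: (leqP (exponent AG) 2) => [le|gt].
  have cinv : forall c, c \in A -> c^-1 = c.
    move=> c cA; apply/eqP; rewrite eq_invg_mul.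
    by have := exp_le2 le cA; rewrite expgS expg1 => ->.
  have cent : forall x, x \in W -> x \notin A -> x \in 'C([set: gT]).
    move=> x xW xA; have [xI xinv] := inW x xW xA.
    rewrite -sub_cent1.
    have -> : 'C[x] = [set: gT]; last exact: subxx.
    apply: (@big_subg _ [set: gT]%G); first exact: groupP; first exact: subsetT.
    have sY : W :&: x^-1 *: W \subset 'C[x].
      apply/subsetP => y; rewrite in_setI mem_lcoset invgK => /andP[yW xyW].
      apply/cent1P.
      case: (boolP (y \in A)) => yA.
        by apply: comm_conj; rewrite xinv // cinv.
      case: (boolP (x * y \in A)) => xyA.
        have := xinv _ xyA; rewrite cinv // conjgE -(mulgA x y x) mulKg => E.
        exact: E.
      have [yI _] := inW y yW yA.
      have [xyI _] := inW (x * y) xyW xyA.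
      by apply: commute_sym; apply: c1.
    have := subset_leq_card sY; have := Yb x.
    move: W56 A3; rewrite /= cardsT; cardlia.
  have Z : 'C([set: gT]) = [set: gT].
    apply: (@big_subg _ [set: gT]%G); first exact: groupP; first exact: subsetT.
    have sWA : W :\: A \subset 'C([set: gT]).
      by apply/subsetP => x /setDP[xW xA]; apply: cent.
    have := subset_leq_card sWA; rewrite cardsD.
    have := subset_leq_card (subsetIr W A).
    move: W56 A3; rewrite /= cardsT; cardlia.
  apply: nab; apply/andP; split; last by rewrite ltnNge.
  by rewrite /abelian Z subxx.
case: (pickP [pred c | (c \in A) && (c ^+ 2 != 1)]) => [c1' /andP[c1A c1sq] | none]; last first.
  have : exponent AG <= 2.
    apply: le2_exp => c cA; have := none c; rewrite /= cA /= => /negbFE/eqP.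
    done.
  by rewrite leqNgt gt.
have sY : W :&: x0^-1 *: W \subset A :|: x0^-1 *: A.
  apply/subsetP => y; rewrite in_setI mem_lcoset invgK => /andP[yW xyW].
  rewrite in_setU mem_lcoset invgK.
  case: (boolP (y \in A)) => //= yA.
  case: (boolP (x0 * y \in A)) => //= xyA.
  have [_ yinv] := inW y yW yA.
  have [_ xyinv] := inW (x0 * y) xyW xyA.
  case/negP: c1sq; apply/eqP.
  have E : c1' = c1'^-1.
    by rewrite -{1}(xyinv _ c1A) conjgM x0inv // conjVg yinv // invgK.
  by rewrite expgS expg1 {1}E mulVg.
have := subset_leq_card sY; have := leq_card_setU A (x0^-1 *: A).
rewrite card_lcoset => /leqifP; case: ifP => _ h.
  have := Yb x0; move: W56 A3 h; cardlia.
have := Yb x0; move: W56 A3 h; cardlia.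
Qed.

Lemma fix_half (gT : finGroupType) (a : {perm gT}) :
  homp a -> a != 1 -> 2 * #|[set x | a x == x]| <= #|gT|.
Proof.
move=> aM a1; have a1' := hom1 aM.
pose A := [set x | a x == x].
have gA : group_set A.
  apply/group_setP; split; first by rewrite inE a1'.
  by move=> x y; rewrite !inE aM => /eqP-> /eqP->.
pose AG := Group gA.
have AT : A != [set: gT].
  apply: contra a1 => /eqP AT; apply/eqP/permP => x.
  have : x \in A by rewrite AT inE.
  by rewrite inE perm1 => /eqP.
have sAT : AG \subset [set: gT] by apply: subsetT.
have Lk := Lagrange sAT.
have k2 : 2 <= #|[set: gT] : AG|.
  move: Lk; have := indexg_gt0 [set: gT] AG; case: #|_ : _| => [|[|k]] // _.
  rewrite muln1 => E; case/negP: AT; rewrite eqEcard subsetT /=.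
  by move: E; rewrite /= => ->.
have LkN : (#|A| * #|[set: gT] : AG|)%N = #|gT| by rewrite -cardsT -Lk.
by rewrite -LkN mulnC leq_mul2l; apply/orP; right.
Qed.

Lemma keyD (gT : finGroupType) (a : {perm gT}) :
  homp a -> prime #[a] -> ~ abelian_exp_gt2 gT -> ~ gen_dicyclic gT ->
  #|[set: gT]| <= 24 * #|Dset a|.
Proof.
move=> aM pa nab ndic.
have a1 : a != 1 by rewrite -order_eq1; apply/negP => /eqP e; rewrite e in pa.
case: (even_prime pa) => [o2|oodd].
  apply: inv_case => // x.
  have := expg_order a; rewrite o2 => e.
  by have := congr1 (fun p : {perm gT} => p x) e; rewrite expgS expg1 permM perm1.
have it : forall k x, a x = x^-1 -> iter k a x = if odd k then x^-1 else x.
  move=> k x ax; elim: k => [|k IH] //=.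
  rewrite IH; case: (odd k) => /=; last by [].
  by rewrite homV // ax invgK.
have IA : forall x, a x = x^-1 -> a x = x.
  move=> x ax; have := it #[a] x ax; rewrite oodd -permX expg_order perm1 => e.
  by rewrite ax -e.
have sD : ~: [set x | a x == x] \subset Dset a.
  apply/subsetP => x; rewrite in_setC inE => ax; rewrite inE ax /=.
  by apply: contra ax => /eqP/IA ->.
have := subset_leq_card sD; have := cardsC [set x | a x == x]; have := fix_half aM a1.
rewrite cardsT; cardlia.
Qed.

Lemma bad_prime (gT : finGroupType) (S : {set gT}) : S \in bad_sets gT ->
  S^-1 = S /\ exists a : {perm gT}, [/\ homp a, prime #[a] & forall x, (a x \in S) = (x \in S)].
Proof.
case/bad_aut => SV [a [aM a1 aS]]; split => //.
have o1 : 1 < #[a].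
  by have := order_gt0 a; move: a1; rewrite -order_eq1; case: #[a] => [|[|]].
set p := pdiv #[a].
have pp : prime p by apply: pdiv_prime.
have pd : p %| #[a] by apply: pdiv_dvd.
have p0 : 0 < p by apply: prime_gt0.
have q0 : 0 < #[a] %/ p by rewrite divn_gt0 // dvdn_leq.
exists (a ^+ (#[a] %/ p)); split.
- elim: (#[a] %/ p) => [|k IH] x y; first by rewrite !expg0 !perm1.
  by rewrite expgS !permM aM IH.
- rewrite orderXdiv; last by rewrite -{2}(divnK pd) dvdn_mulr.
  by rewrite -{1}(divnK pd) mulKn.
- elim: (#[a] %/ p) => [|k IH] x; first by rewrite expg0 perm1.
  by rewrite expgS permM IH aS.
Qed.

Definition Tset (gT : finGroupType) : {set gT} :=
  [set x | enum_rank x <= enum_rank x^-1].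

Lemma Tset_inv (gT : finGroupType) (x : gT) : x \notin Tset gT -> x^-1 \in Tset gT.
Proof. by rewrite !inE invgK -ltnNge => /ltnW. Qed.

Lemma Tset_card (gT : finGroupType) :
  (2 * #|Tset gT| = #|[set: gT]| + #|invol_set gT|)%N.
Proof.
have E1 : Tset gT :|: (Tset gT)^-1 = [set: gT].
  apply/setP => x; rewrite in_setU mem_invg in_setT !inE invgK.
  exact: leq_total.
have E2 : Tset gT :&: (Tset gT)^-1 = invol_set gT.
  apply/setP => x; rewrite in_setI mem_invg !inE invgK expgS expg1 -eq_invg_mul.
  apply/idP/idP.
    by rewrite -eqn_leq => /eqP/val_inj/enum_rank_inj e; rewrite -e.
  by move/eqP->; rewrite leqnn.
by rewrite -E1 -E2 cardsUI card_invg addnn mul2n.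
Qed.

Definition Fixs (gT : finGroupType) (a : {perm gT}) : {set {set gT}} :=
  [set S : {set gT} | (S^-1 == S) && [forall x, (a x \in S) == (x \in S)]].


Lemma fix_count (gT : finGroupType) (a : {perm gT}) : homp a ->
  exists m k, [/\ #|Fixs a| <= 2 ^ m, (m + k = #|Tset gT|)%N & #|Dset a| <= 4 * k].
Proof.
move=> aM; have aV := homV aM.
pose ip : {perm gT} := perm (@invg_inj gT).
have ipE : forall x, ip x = x^-1 by move=> x; rewrite permE.
pose H := <<[set a; ip]>>%G.
pose orb (x : gT) := [set (h : {perm gT}) x | h in H].
have Ha : a \in H by rewrite mem_gen // !inE eqxx.
have Hip : ip \in H by rewrite mem_gen // !inE eqxx orbT.
have orb_refl : forall x, x \in orb x.
  by move=> x; apply/imsetP; exists 1; rewrite ?group1 ?perm1.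
have orb_sub : forall x y, y \in orb x -> forall z, z \in orb y -> z \in orb x.
  move=> x y /imsetP[h hH ->] z /imsetP[g gH ->]; apply/imsetP.
  by exists (h * g); rewrite ?groupM // permM.
have orb_sym : forall x y, y \in orb x -> x \in orb y.
  move=> x y /imsetP[h hH ->]; apply/imsetP; exists h^-1; rewrite ?groupV //.
  by rewrite permK.
have orb_a : forall x, a x \in orb x by move=> x; apply/imsetP; exists a.
have orb_i : forall x, x^-1 \in orb x by move=> x; apply/imsetP; exists ip; rewrite ?ipE.
pose M := [set x | [forall y in orb x, enum_rank x <= enum_rank y]].
have inM : forall x y, x \in M -> y \in orb x -> enum_rank x <= enum_rank y.
  by move=> x y; rewrite inE => /forallP/(_ y)/implyP.
have minex : forall x, exists2 m, m \in M & m \in orb x.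
  move=> x.
  case: (@arg_minnP _ x (fun y => y \in orb x) (fun y => val (enum_rank y)) (orb_refl x)) => m mO mmin.
  exists m => //; rewrite inE; apply/forallP => y; apply/implyP => yO.
  by apply: mmin; exact: (orb_sub _ _ mO _ yO).
have MT : M \subset Tset gT.
  by apply/subsetP => x xM; rewrite inE; exact: inM xM (orb_i x).
have Hinv : forall S, S \in Fixs a -> forall h, h \in H -> forall x, (h x \in S) = (x \in S).
  move=> S; rewrite inE => /andP[/eqP SV /forallP aS].
  pose K := [set h : {perm gT} | [forall x, (h x \in S) == (x \in S)]].
  have gK : group_set K.
    apply/group_setP; split; first by rewrite inE; apply/forallP => x; rewrite perm1.
    move=> h g; rewrite !inE => /forallP hK /forallP gK'; apply/forallP => x.
    by rewrite permM (eqP (gK' _)) (eqP (hK _)).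
  have sHK : H \subset Group gK.
    rewrite gen_subG; apply/subsetP => h; rewrite !inE => /orP[]/eqP->; apply/forallP => x.
      exact: aS x.
    by rewrite ipE -mem_invg SV.
  by move=> h hH x; have := subsetP sHK h hH; rewrite inE => /forallP/(_ x)/eqP.
have card1 : #|Fixs a| <= 2 ^ #|M|.
  rewrite -card_powerset.
  have inj : {in Fixs a &, injective (fun S => S :&: M)}.
    move=> S1 S2 F1 F2 E; apply/setP => x.
    case: (minex x) => m mM mO.
    case/imsetP: (orb_sym _ _ mO) => h hH xE.
    rewrite xE (Hinv _ F1 h hH) (Hinv _ F2 h hH).
    have e : (m \in S1 :&: M) = (m \in S2 :&: M) by rewrite E.
    by move: e; rewrite !in_setI mM !andbT.
  rewrite -(card_in_imset inj); apply: subset_leq_card; apply/subsetP => _ /imsetP[S _ ->].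
  by rewrite powersetE subsetIr.
pose rep y := if y \in Tset gT then y else y^-1.
have repT : forall y, rep y \in Tset gT.
  by move=> y; rewrite /rep; case: ifP => // /negbT /Tset_inv.
have Dinv : forall x, x \in Dset a -> x^-1 \in Dset a.
  move=> x; rewrite !inE aV invgK => /andP[h1 h2]; apply/andP; split.
    by rewrite (inj_eq invg_inj).
  by rewrite eqg_invLR.
have Da : forall x, x \in Dset a -> a x \in Dset a.
  by move=> x; rewrite !inE -aV !(inj_eq perm_inj).
have repD : forall y, y \in Dset a -> rep y \in Dset a.
  by move=> y; rewrite /rep; case: ifP => // _ /Dinv.
pose Dt := Dset a :&: Tset gT.
have g_orb : forall x, rep (a x) \in orb x.
  move=> x; rewrite /rep; case: ifP => _; first exact: orb_a.
  exact: (orb_sub _ _ (orb_a x) _ (orb_i (a x))).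
have g_ne : forall x, x \in Dset a -> rep (a x) != x.
  move=> x; rewrite inE => /andP[h1 h2]; rewrite /rep; case: ifP => _ //.
  by rewrite eqg_invLR.
have g_notM : forall x, x \in Dset a -> x \in M -> rep (a x) \notin M.
  move=> x xD xM; apply/negP => gM.
  have l1 := inM _ _ gM (orb_sym _ _ (g_orb x)).
  have l2 := inM _ _ xM (g_orb x).
  case/negP: (g_ne x xD); apply/eqP/enum_rank_inj/val_inj/eqP.
  by rewrite eqn_leq l1 l2.
have key : forall u v, u \in Tset gT -> v \in Tset gT -> u = v^-1 -> u = v.
  move=> u v uT vT e; subst u; apply: enum_rank_inj; apply/val_inj/eqP.
  by move: uT vT; rewrite !inE invgK eqn_leq => -> ->.
have g_inj : {in Tset gT &, injective (fun x => rep (a x))}.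
  move=> x y xT yT; rewrite /rep /=.
  case: ifP => _; case: ifP => _ e.
  - exact: perm_inj e.
  - apply: (key _ _ xT yT); apply: (@perm_inj _ a); rewrite aV; exact: e.
  - apply/esym; apply: (key _ _ yT xT); apply: (@perm_inj _ a); rewrite aV -e //.
  - by apply: perm_inj; exact: invg_inj e.
have card2 : #|Dt :&: M| <= #|Dt :\: M|.
  have inj2 : {in Dt :&: M &, injective (fun x => rep (a x))}.
    move=> x y; rewrite !in_setI => /andP[/andP[_ xT] _] /andP[/andP[_ yT] _].
    exact: g_inj.
  rewrite -(card_in_imset inj2); apply: subset_leq_card.
  apply/subsetP => z /imsetP[x xDM ->]; move: xDM; rewrite !in_setI => /andP[/andP[xD xT] xM].
  by rewrite in_setD in_setI g_notM // repD ?Da // repT.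
have card3 : #|Dset a| <= 2 * #|Dt|.
  have sub : Dset a \subset Dt :|: Dt^-1.
    apply/subsetP => x xD; rewrite in_setU mem_invg !in_setI xD /=.
    by case: (boolP (x \in Tset gT)) => //= xT; rewrite Dinv // Tset_inv.
  apply: (leq_trans (subset_leq_card sub)).
  by rewrite cardsU card_invg mul2n -addnn leq_subr.
exists #|M|, #|Tset gT :\: M|; split => //.
  by rewrite -{1}(setIidPr MT) cardsID.
have := cardsID M Dt; have := subset_leq_card (setSD M (subsetIr (Dset a) (Tset gT))).
move: card2 card3; rewrite -/Dt; cardlia.
Qed.

Lemma gen_seq_aux (gT : finGroupType) : forall m (s : seq gT),
  #|gT| - #|<<[set x in s]>>| <= m -> 2 ^ size s <= #|<<[set x in s]>>| ->
  exists s' : seq gT, <<[set x in s']>> = [set: gT] /\ 2 ^ size s' <= #|gT|.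
Proof.
elim=> [|m IH] s hm hs.
  exists s; split; last by apply: (leq_trans hs); rewrite -cardsT subset_leq_card ?subsetT.
  apply/eqP; rewrite eqEcard subsetT /= cardsT; move: hm; cardlia.
case: (eqVneq <<[set x in s]>> [set: gT]) => [E|NE].
  by exists s; split => //; apply: (leq_trans hs); rewrite -cardsT subset_leq_card ?subsetT.
have : ~~ ([set: gT] \subset <<[set x in s]>>).
  by apply: contra NE => sT; rewrite eqEsubset sT subsetT.
case/subsetPn => x _ xG.
have sGG : <<[set y in s]>> \subset <<[set y in x :: s]>>.
  by apply: genS; apply/subsetP => y; rewrite !inE => ->; rewrite orbT.
have xG' : x \in <<[set y in x :: s]>> by apply: mem_gen; rewrite !inE eqxx.
have L := Lagrange sGG.
have k2 : 2 <= #|<<[set y in x :: s]>> : <<[set y in s]>>|.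
  move: L; have := indexg_gt0 <<[set y in x :: s]>> <<[set y in s]>>.
  case: #|_ : _| => [|[|k]] // _; rewrite muln1 => E.
  have : <<[set y in s]>> = <<[set y in x :: s]>>.
    by apply/eqP; rewrite eqEcard sGG /= E leqnn.
  by move=> E'; case/negP: xG; rewrite E'.
have G0 := cardG_gt0 <<[set y in s]>>%G.
apply: (IH (x :: s)).
  move: hm L k2 G0; rewrite /=.
  move: (#|<<[set y in x :: s]>> : <<[set y in s]>>|) => k.
  cardlia.
rewrite (_ : size (x :: s) = (size s).+1) // expnS.
move: hs L k2; move: (#|<<[set y in x :: s]>> : <<[set y in s]>>|) => k; rewrite /=.
cardlia.
Qed.

Definition AutS (gT : finGroupType) : {set {perm gT}} :=
  [set a : {perm gT} | [forall x, forall y, a (x * y) == a x * a y]].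

Lemma aut_card (gT : finGroupType) :
  exists d, #|AutS gT| <= #|gT| ^ d /\ 2 ^ d <= #|gT|.
Proof.
have [s [sG sn]] : exists s' : seq gT, <<[set x in s']>> = [set: gT] /\ 2 ^ size s' <= #|gT|.
  apply: (@gen_seq_aux _ #|gT| [::]); first exact: leq_subr.
  by rewrite expn0 cardG_gt0.
exists (size s); split => //.
pose f (a : {perm gT}) : {ffun 'I_(size s) -> gT} := [ffun i : 'I_(size s) => a (nth 1 s i)].
have inj : {in AutS gT &, injective f}.
  move=> a b; rewrite !inE => /forallP aM /forallP bM E.
  pose Eab := [set x | a x == b x].
  have gE : group_set Eab.
    apply/group_setP; split.
      rewrite inE (@hom1 _ a) ?(@hom1 _ b) //.
        by move=> x y; apply/eqP; move/forallP: (bM x) => /(_ y).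
      by move=> x y; apply/eqP; move/forallP: (aM x) => /(_ y).
    move=> x y; rewrite !inE => /eqP ex /eqP ey.
    have /forallP/(_ y)/eqP -> := aM x.
    have /forallP/(_ y)/eqP -> := bM x.
    by rewrite ex ey.
  have sE : <<[set x in s]>> \subset Group gE.
    rewrite gen_subG; apply/subsetP => x; rewrite inE => xs.
    have xi : index x s < size s by rewrite index_mem.
    have := congr1 (fun g : {ffun 'I_(size s) -> gT} => g (Ordinal xi)) E.
    by rewrite /f !ffunE /= nth_index // => e; rewrite inE e eqxx.
  apply/permP => x; have : x \in Group gE by apply: (subsetP sE); rewrite sG inE.
  by rewrite inE => /eqP.
rewrite -(card_in_imset inj).
apply: (leq_trans (subset_leq_card (subsetT _))).
by rewrite cardsT card_ffun card_ord.
Qed.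

Lemma INR_expn (m k : nat) : INR (m ^ k) = Rpow_def.pow (INR m) k.
Proof.
elim: k => [|k IH]; first by rewrite expn0.
by rewrite expnS mulnE mult_INR IH.
Qed.

Lemma real_aut (n d : nat) : (1 <= n)%N -> (2 ^ d <= n)%N ->
  Rle (INR (n ^ d)) (Rpower 2 (Rsqr (Rdiv (ln (INR n)) (ln 2)))).
Proof.
move=> n1 dn.
have n0 : Rlt 0 (INR n) by apply: lt_0_INR; apply/ltP.
have l2 : Rlt 0 (ln 2).
  rewrite -ln_1; apply: ln_increasing; lra.
have n1R : Rle 1 (INR n) by rewrite -INR_1; apply: le_INR; apply/leP.
have L0 : Rle 0 (ln (INR n)).
  case: (Rle_lt_or_eq_dec _ _ n1R) => h; last by rewrite -h ln_1; lra.
  by rewrite -ln_1; left; apply: ln_increasing; lra.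
have hd : Rle (INR d * ln 2) (ln (INR n)).
  rewrite -ln_pow; last by lra.
  have h2 : Rle (Rpow_def.pow 2 d) (INR n).
    rewrite -(INR_expn 2 d) //=; apply: le_INR; apply/leP; exact: dn.
  case: (Rle_lt_or_eq_dec _ _ h2) => h; last by rewrite h; lra.
  by left; apply: ln_increasing => //; apply: pow_lt; lra.
rewrite INR_expn -Rpower_pow //.
have -> : Rpower (INR n) (INR d) = Rpower 2 (INR d * ln (INR n) / ln 2).
  rewrite /Rpower; congr exp; field; lra.
apply: Rle_Rpower; first lra.
rewrite /Rsqr.
have hd' : Rle (INR d) (ln (INR n) / ln 2).
  apply: (Rmult_le_reg_r (ln 2)) => //; rewrite /Rdiv Rmult_assoc Rinv_l; lra.
have e : Rdiv (Rmult (INR d) (ln (INR n))) (ln 2) = Rmult (INR d) (Rdiv (ln (INR n)) (ln 2)) by field; lra.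
rewrite e; apply: Rmult_le_compat_r => //.
apply: Rmult_le_pos => //; left; apply: Rinv_0_lt_compat => //.
Qed.

Lemma AutS_hom (gT : finGroupType) (a : {perm gT}) : a \in AutS gT -> homp a.
Proof. by rewrite inE => /forallP aM x y; apply/eqP; move/forallP: (aM x) => /(_ y). Qed.

Lemma card_bigcup_le (T I : finType) (P : {set I}) (F : I -> {set T}) :
  #|\bigcup_(i in P) F i| <= \sum_(i in P) #|F i|.
Proof.
elim/big_rec2: _ => [|i x U _ IH]; first by rewrite cards0.
apply: (leq_trans (leq_card_setU _ _)); by rewrite leq_add2l.
Qed.

Unset Implicit Arguments.

Theorem proposition2p5 (gT : finGroupType) :
  ~ abelian_exp_gt2 gT -> ~ gen_dicyclic gT ->
  Rle (INR #|bad_sets gT|)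
      (Rpower 2 (Rplus (Rminus (cR gT) (Rdiv (INR #|[set: gT]|) 96))
                       (Rsqr (Rdiv (ln (INR #|[set: gT]|)) (ln 2))))).
Proof.
move=> nab ndic.
set n := #|[set: gT]|.
pose Aut' := [set a in AutS gT | n <= 24 * #|Dset a|].
have sub : bad_sets gT \subset \bigcup_(a in Aut') Fixs a.
  apply/subsetP => S SB; have [SV [a [aM pa aS]]] := bad_prime SB.
  apply/bigcupP; exists a.
    rewrite inE; apply/andP; split; last exact: keyD.
    by rewrite inE; apply/forallP => x; apply/forallP => y; rewrite aM.
  by rewrite inE SV eqxx /=; apply/forallP => x; rewrite aS.
have [d [dA dn]] := aut_card gT.
have n1 : 0 < n by rewrite /n cardsT; apply/card_gt0P; exists 1.
have RP : forall y, Rle 0 (Rpower 2 y) by move=> y; rewrite /Rpower; left; apply: exp_pos.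
case: (eqVneq Aut' set0) => [A0|/set0Pn [a0 a0A]].
  have : bad_sets gT \subset set0.
    by move: sub; rewrite A0 big_pred0 // => x; rewrite in_set0.
  move/subset_leq_card; rewrite cards0 leqn0 => /eqP ->.
  by rewrite /=; apply: RP.
pose c := ((n + 95) %/ 96)%N.
have cn : n <= 96 * c.
  have := divn_eq (n + 95) 96; have := ltn_pmod (n + 95) (isT : 0 < 96).
  rewrite /c; move: ((n + 95) %/ 96) ((n + 95) %% 96) => q r; lia.
have cle : forall k, n <= 96 * k -> c <= k.
  move=> k h; rewrite /c -ltnS ltn_divLR //; lia.
have [a0S h0] : a0 \in AutS gT /\ n <= 24 * #|Dset a0|.
  by move: a0A; rewrite inE => /andP[].
have [m0 [k0 [_ mk0 Dk0]]] := fix_count (AutS_hom a0S).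
have cT : c <= #|Tset gT|.
  have := cle k0; move: h0 Dk0 mk0; cardlia.
pose M0 := (#|Tset gT| - c)%N.
have fixb : forall a, a \in Aut' -> #|Fixs a| <= 2 ^ M0.
  move=> a; rewrite inE => /andP[aA h].
  have [m [k [fm mk Dk]]] := fix_count (AutS_hom aA).
  apply: (leq_trans fm); rewrite leq_exp2l //.
  have := cle k; move: h Dk mk; rewrite /M0; cardlia.
have natb : #|bad_sets gT| <= n ^ d * 2 ^ M0.
  apply: (leq_trans (subset_leq_card sub)).
  apply: (leq_trans (card_bigcup_le _ _)).
  apply: (@leq_trans (\sum_(a in Aut') 2 ^ M0)).
    by apply: leq_sum => a aA; apply: fixb.
  rewrite sum_nat_const leq_mul2r; apply/orP; right.
  rewrite /n cardsT; apply: (leq_trans _ dA).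
  by apply: subset_leq_card; apply/subsetP => a; rewrite inE => /andP[].
have hR := le_INR _ _ (elimT leP natb).
apply: (Rle_trans _ _ _ hR).
rewrite mulnE mult_INR Rpower_plus Rmult_comm.
apply: Rmult_le_compat.
- exact: pos_INR.
- exact: pos_INR.
- have e2 : INR 2 = IZR 2 by simpl; lra.
  rewrite INR_expn e2 -Rpower_pow; last lra.
  apply: Rle_Rpower; first lra.
  have eT : cR gT = INR #|Tset gT|.
    rewrite /cR -Tset_card mulnE mult_INR /=; field.
  rewrite eT /M0 minus_INR; last by apply/leP.
  have : Rle (INR n) (INR (96 * c)) by apply: le_INR; apply/leP.
  rewrite mulnE mult_INR => h.
  rewrite /n in h |- *.
  have e96 : INR 96 = IZR 96 by rewrite INR_IZR_INZ.
  rewrite e96 in h; lra.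
- by apply: real_aut; rewrite /n cardsT in n1 dn *.
Qed.
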